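(* Let $r\geq 1$, $k\geq 2$, $G=(N^k,\Theta)$ a downward directed lattice graph, $F$ a partial selection function, $D\subset N^k$ finite, and $\rho_D:D\to N$ with $\rho_D(x)\geq\min(x)$ for all $x\in D$. Then for all $z\in D$: if $\Phi^D_z\neq\emptyset$ then $h^\rho_D(z)=\hat{s}_D(z)<\max(z)$; if $\Phi^D_z=\emptyset$ then $h^\rho_D(z)=\rho_D(z)$ and $\hat{s}_D(z)=\max(z)$. Moreover, for any $E\subset N$ of cardinality $p\geq 2$ with $E^k\subseteq D$, $\hat{s}_D$ is regressively regular over $E$ if and only if $h^\rho_D$ is regressively regular over $E$.
   Context: $N$ denotes the nonnegative integers. For $z\in N^k$, $\max(z)$, $\min(z)$ are the max and min coordinates. A directed graph $G=(N^k,\Theta)$ is a downward directed lattice graph if every edge $(x,y)\in\Theta$ satisfies $\max(x)>\max(y)$. For finite $D$, $\Theta_D=\{(x,y)\in\Theta:x,y\in D\}$ and $G^z_D=\{x:(z,x)\in\Theta_D\}$. A partial selection function is a partial function $F: N^k\times(N^k\times N)^r\rightarrow N$ such that whenever $F(x,((y_1,n_1),\ldots,(y_r,n_r)))$ is defined it equals some $n_i$. $\hat{s}_D$: defined recursively on $\max(z)$: $\Phi^D_z$ is the set of defined values $F[z,(y_1,n_1),\ldots,(y_r,n_r)]$ over $y_1,\ldots,y_r\in G^z_D$, where $n_i=\hat{s}_D(y_i)$ if $\Phi^D_{y_i}\neq\emptyset$ and $n_i=\min(y_i)$ otherwise; $\hat{s}_D(z)=\max(z)$ if $\Phi^D_z=\emptyset$,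 else $\hat{s}_D(z)=\min\Phi^D_z$. $h^\rho_D$: defined by the same recursion, with $\Phi^D_z$ the set of defined values $F[z,(y_1,n_1),\ldots,(y_r,n_r)]$, $y_i\in G^z_D$, where $n_i=h^\rho_D(y_i)$ if $\Phi^D_{y_i}\neq\emptyset$ and $n_i=\min(y_i)$ otherwise; $h^\rho_D(z)=\rho_D(z)$ if $\Phi^D_z=\emptyset$, else $h^\rho_D(z)=\min\Phi^D_z$. Order types: $x=(n_i)$ and $y=(m_i)$ are order equivalent if $\{(i,j):n_i<n_j\}=\{(i,j):m_i<m_j\}$ and $\{(i,j):n_i=n_j\}=\{(i,j):m_i=m_j\}$. $f:D\to N$ is regressively regular over $E$ ($E^k\subseteq D$) if for each order type class in $E^k$, either $f(x)=f(y)<\min(E)$ for all $x,y$ in the class, or $f(x)\geq\min(x)$ for all $x$ in the class. *)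

(* Defs.v *)
From mathcomp Require Import all_boot.
Set Implicit Arguments. Unset Strict Implicit. Unset Printing Implicit Defensive.

Section Defs.
Variable k : nat.
Notation pt := (k.-tuple nat).

Definition maxt (z : pt) : nat := \max_(i <- z) i.
Definition mint (z : pt) : nat := foldr minn (head 0 z) z.

Definition seqmin (s : seq nat) : nat := foldr minn (head 0 s) s.

Definition downward_directed (Theta : rel pt) : Prop :=
  forall x y, Theta x y -> maxt y < maxt x.

Definition partial_selection (r : nat) (F : pt -> seq (pt * nat) -> option nat) :=
  forall x l n, size l = r -> F x l = Some n -> n \in unzip2 l.

Fixpoint seqs {A : Type} (r : nat) (l : seq A) : seq (seq A) :=
  match r with
  | 0 => [:: [::]]
  | r'.+1 => [seq y :: s | y <- l, s <- seqs r' l]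
  end.

Variables (r : nat) (Theta : rel pt) (F : pt -> seq (pt * nat) -> option nat)
          (D : seq pt).

Definition GD (z : pt) : seq pt := [seq y <- D | (z \in D) && Theta z y].

(* the set of defined values F[z,(y_1,c y_1),...,(y_r,c y_r)], y_i in G^z_D *)
Definition Phi_with (c : pt -> nat) (z : pt) : seq nat :=
  pmap (fun ys => F z [seq (y, c y) | y <- ys]) (seqs r (GD z)).

(* fuel-indexed recursion: returns (Phi_z, h(z)); with default rho.
   Since the graph is downward directed, fuel > max(z) suffices. *)
Fixpoint hrec (rho : pt -> nat) (fuel : nat) (z : pt) : seq nat * nat :=
  match fuel with
  | 0 => ([::], rho z)
  | f.+1 =>
      let c y := let p := hrec rho f y in
                 if p.1 is [::] then mint y else p.2 in
      let Ph := Phi_with c z in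
      (Ph, if Ph is [::] then rho z else seqmin Ph)
  end.

Definition PhiD (rho : pt -> nat) (z : pt) : seq nat := (hrec rho (maxt z).+1 z).1.
Definition hD (rho : pt -> nat) (z : pt) : nat := (hrec rho (maxt z).+1 z).2.

Definition shatD (z : pt) : nat := hD maxt z.
Definition PhiS (z : pt) : seq nat := PhiD maxt z.

End Defs.

Definition order_equiv (k : nat) (x y : k.-tuple nat) : Prop :=
  forall i j : 'I_k,
    (tnth x i < tnth x j) = (tnth y i < tnth y j) /\
    (tnth x i == tnth x j) = (tnth y i == tnth y j).

Definition inEk (k : nat) (E : seq nat) (x : k.-tuple nat) : bool := all (mem E) x.

Definition regressively_regular (k : nat) (f : k.-tuple nat -> nat) (E : seq nat) : Prop :=
  forall x, inEk E x ->
    (forall y, inEk E y -> order_equiv x y -> f y = f x /\ f x < seqmin E)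
    \/ (forall y, inEk E y -> order_equiv x y -> mint y <= f y).

(* Main.v *)
Require Import Defs.
From mathcomp Require Import all_boot.

Lemma seqs_mem (A : eqType) (r : nat) (l : seq A) (ys : seq A) :
  ys \in seqs r l -> size ys = r /\ all (mem l) ys.
Proof.
elim: r ys => [|r IH] ys /=; first by rewrite inE => /eqP ->.
case/allpairsPdep => y [s [Hy Hs ->]].
by have [<- Ha] := IH _ Hs; rewrite /= Hy Ha.
Qed.

Lemma foldr_minn_mem (x : nat) s : foldr minn x s \in x :: s.
Proof.
elim: s => [|b s IH] /=; first by rewrite inE.
rewrite /minn; case: ifP => _; first by rewrite !inE eqxx orbT.
move: IH; rewrite !inE => /orP [->|->] //; by rewrite !orbT.
Qed.

Lemma foldr_minn_le (x : nat) s e : e \in s -> foldr minn x s <= e.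
Proof.
elim: s => [|b s IH] //=; rewrite inE => /orP [/eqP ->|H]; first exact: geq_minl.
exact: leq_trans (geq_minr _ _) (IH H).
Qed.

Lemma seqmin_mem (s : seq nat) : s != [::] -> seqmin s \in s.
Proof.
rewrite /seqmin; case: s => // a s _ /=.
have := foldr_minn_mem a (a :: s); rewrite /= inE => /orP [/eqP ->|//].
by rewrite inE eqxx.
Qed.

Lemma seqmin_le (s : seq nat) e : e \in s -> seqmin s <= e.
Proof. exact: foldr_minn_le. Qed.

Lemma mint_le_maxt k (y : k.-tuple nat) : mint y <= maxt y.
Proof.
rewrite /mint /maxt; case: y => [[|a s]] _ //=.
apply: leq_trans (geq_minl _ _) _.
by rewrite big_cons leq_maxl.
Qed.

Lemma maxt_ge k (y : k.-tuple nat) e : e \in (y : seq nat) -> e <= maxt y.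
Proof.
rewrite /maxt; case: y => s _ /=.
elim: s => [|b s IH] //=; rewrite big_cons inE => /orP [/eqP ->|H].
  exact: leq_maxl.
exact: leq_trans (IH H) (leq_maxr _ _).
Qed.

Lemma mint_mem k (y : k.-tuple nat) : 0 < k -> mint y \in (y : seq nat).
Proof.
move=> k0; rewrite /mint; case: y => [[|a s]] /= Hs.
  by move: Hs k0 => /eqP <-.
have := foldr_minn_mem a (a :: s); rewrite /= inE => /orP [/eqP ->|//].
by rewrite inE eqxx.
Qed.

Section H.
Variables (k r : nat) (Theta : rel (k.-tuple nat))
    (F : k.-tuple nat -> seq (k.-tuple nat * nat) -> option nat)
    (D : seq (k.-tuple nat)).

Lemma hrec2 rho f z :
  (hrec r Theta F D rho f z).2 =
  if (hrec r Theta F D rho f z).1 is [::] then rho z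
  else seqmin (hrec r Theta F D rho f z).1.
Proof. by case: f. Qed.

Lemma Phi_with_ext c1 c2 z : c1 =1 c2 ->
  Phi_with r Theta F D c1 z = Phi_with r Theta F D c2 z.
Proof.
move=> E; rewrite /Phi_with; apply: eq_pmap => ys; congr (F z _).
by apply: eq_map => y; rewrite E.
Qed.

Lemma hrec1 rho1 rho2 f z :
  (hrec r Theta F D rho1 f z).1 = (hrec r Theta F D rho2 f z).1.
Proof.
elim: f z => [|f IH] z //=.
apply: Phi_with_ext => y.
rewrite !hrec2 IH.
by case: (hrec r Theta F D rho2 f y).1.
Qed.

Lemma hrec_bound rho f z n :
  downward_directed Theta -> partial_selection r F ->
  n \in (hrec r Theta F D rho f z).1 -> n < maxt z.
Proof.
move=> Hdd Hps; elim: f z n => [|f IH] z n //=.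
rewrite /Phi_with mem_pmap => /mapP [ys Hys /esym Hn].
have [Hsz Hall] := @seqs_mem _ _ _ _ Hys.
have := Hps _ _ _ _ Hn; rewrite size_map Hsz => /(_ erefl).
rewrite /unzip2 -map_comp => /mapP [y Hy ->] /=.
have /allP /(_ _ Hy) := Hall; rewrite /= /GD mem_filter => /andP [/andP [_ Hth] _].
have Hlt := Hdd _ _ Hth.
idtac.
case E: (hrec r Theta F D rho f y).1 => [|a s].
  apply: leq_ltn_trans Hlt; exact: mint_le_maxt.
rewrite hrec2 E -E; apply: ltn_trans Hlt; apply: IH.
by apply: seqmin_mem; rewrite E.
Qed.
End H.

Theorem mainTheorem2 (r k : nat) (Theta : rel (k.-tuple nat))
    (F : k.-tuple nat -> seq (k.-tuple nat * nat) -> option nat)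
    (D : seq (k.-tuple nat)) (rho : k.-tuple nat -> nat) :
  1 <= r -> 2 <= k ->
  downward_directed Theta ->
  partial_selection r F ->
  (forall x, x \in D -> mint x <= rho x) ->
  (forall z, z \in D ->
     (PhiS r Theta F D z != [::] ->
        hD r Theta F D rho z = shatD r Theta F D z /\
        shatD r Theta F D z < maxt z) /\
     (PhiS r Theta F D z = [::] ->
        hD r Theta F D rho z = rho z /\ shatD r Theta F D z = maxt z)) /\
  (forall E : seq nat, uniq E -> 2 <= size E ->
     (forall x : k.-tuple nat, inEk E x -> x \in D) ->
     (regressively_regular (shatD r Theta F D) E <->
      regressively_regular (hD r Theta F D rho) E)).
Proof.
move=> r1 k2 Hdd Hps Hrho.
have Eh : forall z, hD r Theta F D rho z =
   if PhiS r Theta F D z is [::] then rho z else seqmin (PhiS r Theta F D z).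
  by move=> z; rewrite /hD hrec2 /PhiS /PhiD (@hrec1 k r Theta F D rho (@maxt k)).
have Es : forall z, shatD r Theta F D z =
   if PhiS r Theta F D z is [::] then maxt z else seqmin (PhiS r Theta F D z).
  by move=> z; rewrite /shatD /hD hrec2.
have Hlt : forall z, PhiS r Theta F D z != [::] -> shatD r Theta F D z < maxt z.
  move=> z Hne; rewrite Es; case E: (PhiS r Theta F D z) Hne => [|a s] // _.
  rewrite -E; apply: (@hrec_bound k r Theta F D (@maxt k) (maxt z).+1 z _ Hdd Hps).
  by apply: seqmin_mem; rewrite E.
split.
  move=> z _; split.
    move=> Hne; split; last exact: Hlt.
    by rewrite Eh Es; case: (PhiS r Theta F D z) Hne.
  by move=> E; rewrite Eh Es E.
move=> E _ _ HD.
have k0 : 0 < k by apply: leq_trans k2.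
have minE : forall y : k.-tuple nat, inEk E y -> seqmin E <= mint y.
  move=> y Hy; apply: seqmin_le.
  by move/allP: Hy; apply; apply: mint_mem.
have refl : forall x : k.-tuple nat, order_equiv x x by [].
split => Hreg x Hx.
- case: (Hreg x Hx) => [Hl|Hr]; [left|right] => y Hy Hxy.
  + have [Hfy Hfx] := Hl y Hy Hxy.
    have ne : forall z, inEk E z -> shatD r Theta F D z < seqmin E ->
                PhiS r Theta F D z != [::].
      move=> z Hz; rewrite Es; case: (PhiS r Theta F D z) => // H.
      have := leq_ltn_trans (leq_trans (minE z Hz) (mint_le_maxt _ z)) H.
      by rewrite ltnn.
    have ex : forall z, PhiS r Theta F D z != [::] ->
                hD r Theta F D rho z = shatD r Theta F D z.
      by move=> z; rewrite Eh Es; case: (PhiS r Theta F D z).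
    rewrite !ex ?Hfy //; [exact: ne | apply: ne => //; by rewrite Hfy].
  + have := Hr y Hy Hxy; rewrite Eh Es.
    case: (PhiS r Theta F D y) => // _; exact: Hrho (HD _ Hy).
- case: (Hreg x Hx) => [Hl|Hr]; [left|right] => y Hy Hxy.
  + have [Hfy Hfx] := Hl y Hy Hxy.
    have ne : forall z, inEk E z -> hD r Theta F D rho z < seqmin E ->
                PhiS r Theta F D z != [::].
      move=> z Hz; rewrite Eh; case: (PhiS r Theta F D z) => // H.
      have := leq_ltn_trans (leq_trans (minE z Hz) (Hrho z (HD _ Hz))) H.
      by rewrite ltnn.
    have ex : forall z, PhiS r Theta F D z != [::] ->
                shatD r Theta F D z = hD r Theta F D rho z.
      by move=> z; rewrite Eh Es; case: (PhiS r Theta F D z).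
    rewrite !ex ?Hfy //; [exact: ne | apply: ne => //; by rewrite Hfy].
  + have := Hr y Hy Hxy; rewrite Eh Es.
    case: (PhiS r Theta F D y) => [_|//]; exact: mint_le_maxt.
Qed.
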